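(* Let $G=(V=V_0\uplus V_1, v_{\mathsf{init}}, E,\gamma)$ be a quantitative graph game and let $d=\frac{p}{q}>1$ be the discount factor, with $p,q$ positive integers. Then the optimal cost $W$ of the game is a rational number with denominator at most $(p^{|V|}-q^{|V|})\cdot p^{|V|}$.
   Context: A quantitative graph game $G=(V=V_0\uplus V_1, v_{\mathsf{init}},E,\gamma)$ consists of a finite directed graph $(V,E)$ in which every state has at least one outgoing edge, a partition of $V$ into $V_0$ (states of the maximizing player $P_0$) and $V_1$ (states of the minimizing player $P_1$), an initial state $v_{\mathsf{init}}$, and an integer cost function $\gamma:E\to\mathbb{Z}$. A play is an infinite path $v_0v_1\dots$ with $v_0=v_{\mathsf{init}}$, where the player owning the current state chooses the successor; its cost with discount factor $d>1$ is $\sum_{k\ge0}\gamma(v_k,v_{k+1})/d^{k}$. Define $\mathit{wt}_1(v)=\max\{\gamma(v,w):(v,w)\in E\}$ if $v\in V_0$ and $\min\{\gamma(v,w):(v,w)\in E\}$ if $v\in V_1$, and $\mathit{wt}_{k+1}(v)=\max\{\gamma(v,w)+\frac1d\mathit{wt}_k(w):(v,w)\in E\}$ if $v\in V_0$, with $\min$ instead of $\max$ if $v\in V_1$. The optimal cost is $W=\lim_{k\to\infty}\mathit{wt}_k(v_{\mathsf{init}})$. *)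

(* Defs.v *)
From HB Require Import structures.
From mathcomp Require Import all_boot all_order all_algebra.
From mathcomp Require Import all_classical all_reals all_analysis.
Set Implicit Arguments. Unset Strict Implicit. Unset Printing Implicit Defensive.
Import Order.TTheory GRing.Theory Num.Theory.
Local Open Scope ring_scope.

(* A quantitative graph game on a finite state type V:
   - [owner0 v] holds iff v belongs to V_0 (maximizing player P_0),
     otherwise v belongs to V_1 (minimizing player P_1);
   - [E] is the edge relation; [gamma v w] is the (integer) cost of edge (v,w)
     (its values on non-edges are irrelevant). *)

Definition succs (V : finType) (E : rel V) (v : V) : seq V :=
  [seq w <- enum V | E v w].

(* maximum / minimum of f over the successors of v (the seed is itself a
   successor whenever v has one, so this is the genuine max / min) *)
Definition max_succ (R : realDomainType) (V : finType) (E : rel V) (v : V)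
  (f : V -> R) : R :=
  \big[Num.max/f (head v (succs E v))]_(w <- succs E v) f w.

Definition min_succ (R : realDomainType) (V : finType) (E : rel V) (v : V)
  (f : V -> R) : R :=
  \big[Num.min/f (head v (succs E v))]_(w <- succs E v) f w.

(* [wt k v] is the paper's wt_{k+1}(v), with discount factor d. *)
Fixpoint wt (R : realFieldType) (V : finType) (owner0 : pred V) (E : rel V)
  (gamma : V -> V -> int) (d : R) (k : nat) (v : V) : R :=
  match k with
  | 0 => if owner0 v then max_succ E v (fun w => (gamma v w)%:~R)
         else min_succ E v (fun w => (gamma v w)%:~R)
  | k'.+1 =>
      let f := fun w => (gamma v w)%:~R + d^-1 * wt owner0 E gamma d k' w in
      if owner0 v then max_succ E v f else min_succ E v f
  end.

(* Main.v *)
Require Import Defs.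
From HB Require Import structures.
From mathcomp Require Import all_boot all_order all_algebra.
From mathcomp Require Import all_classical all_reals all_analysis.
From mathcomp Require Import ring lra zify.
Import Order.TTheory GRing.Theory Num.Theory.
Import numFieldNormedType.Exports.
Local Open Scope classical_set_scope.
Local Open Scope ring_scope.

Section Aux.
Variables (R : realType) (V : finType) (owner0 : pred V) (E : rel V)
  (gamma : V -> V -> int) (d : R).
Hypothesis hE : forall v : V, exists w : V, E v w.

Lemma succs_mem v w : (w \in succs E v) = E v w.
Proof. by rewrite mem_filter mem_enum andbT. Qed.

Lemma big_op_attained (op : R -> R -> R)
  (hop : forall x y, op x y = x \/ op x y = y) (y : R) (s : seq V) (f : V -> R) :
  \big[op/y]_(w <- s) f w = y \/ exists2 w, w \in s & \big[op/y]_(w <- s) f w = f w.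
Proof.
elim: s => [|a s IH]; first by rewrite big_nil; left.
rewrite big_cons; case: (hop (f a) (\big[op/y]_(w <- s) f w)) => ->.
  by right; exists a => //; exact: mem_head.
case: IH => [->|[w ws ->]]; first by left.
by right; exists w => //; rewrite in_cons ws orbT.
Qed.

Lemma maxor (x y : R) : Num.max x y = x \/ Num.max x y = y.
Proof. by rewrite maxEle; case: ifP; [right|left]. Qed.

Lemma minor (x y : R) : Num.min x y = x \/ Num.min x y = y.
Proof. by rewrite minEle; case: ifP; [left|right]. Qed.

Lemma attained (op : R -> R -> R)
  (hop : forall x y, op x y = x \/ op x y = y) v (f : V -> R) :
  exists2 w, E v w & \big[op/f (head v (succs E v))]_(w <- succs E v) f w = f w.
Proof.
have [w0 Ew0] := hE v.
have : w0 \in succs E v by rewrite succs_mem.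
have : forall w, w \in succs E v -> E v w by move=> w; rewrite succs_mem.
case: (succs E v) => [//|a s] hs _ /=.
case: (big_op_attained op hop (f a) (a :: s) f) => [->|[w ws ->]].
  by exists a => //; apply: hs; exact: mem_head.
by exists w => //; apply: hs.
Qed.

Lemma max_ub v (f : V -> R) w : E v w -> f w <= max_succ E v f.
Proof.
rewrite -succs_mem /max_succ; move: (f (head v (succs E v))) => y.
elim: (succs E v) => [//|a s IH].
rewrite in_cons big_cons le_max => /orP[/eqP->|/IH->]; last by rewrite orbT.
by rewrite lexx.
Qed.

Lemma min_lb v (f : V -> R) w : E v w -> min_succ E v f <= f w.
Proof.
rewrite -succs_mem /min_succ; move: (f (head v (succs E v))) => y.
elim: (succs E v) => [//|a s IH].
rewrite in_cons big_cons ge_min => /orP[/eqP->|/IH->]; last by rewrite orbT.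
by rewrite lexx.
Qed.

Definition T (f : V -> R) (v : V) : R :=
  if owner0 v then max_succ E v (fun w => (gamma v w)%:~R + d^-1 * f w)
  else min_succ E v (fun w => (gamma v w)%:~R + d^-1 * f w).

Lemma wtS k v : wt owner0 E gamma d k.+1 v = T (wt owner0 E gamma d k) v.
Proof. by []. Qed.

Lemma wt0 v : wt owner0 E gamma d 0 v = T (fun _ => 0) v.
Proof.
rewrite /T /=.
have -> : (fun w => (gamma v w)%:~R + d^-1 * 0) = (fun w => (gamma v w)%:~R : R).
  by apply: funext => w; rewrite mulr0 addr0.
by [].
Qed.

Lemma T_attained f v : exists2 w, E v w & T f v = (gamma v w)%:~R + d^-1 * f w.
Proof.
rewrite /T; case: (owner0 v).
  exact: (attained Num.max maxor v (fun w => (gamma v w)%:~R + d^-1 * f w)).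
exact: (attained Num.min minor v (fun w => (gamma v w)%:~R + d^-1 * f w)).
Qed.

Lemma scale_bound (a e : R) : 0 <= d^-1 -> `|a| <= e ->
  - (d^-1 * e) <= d^-1 * a /\ d^-1 * a <= d^-1 * e.
Proof.
move=> r0; rewrite ler_norml => /andP[h1 h2]; split.
  by rewrite -mulrN; apply: ler_wpM2l.
by apply: ler_wpM2l.
Qed.

Lemma T_contr (f g : V -> R) (e : R) v : 0 <= d^-1 -> (forall w, `|f w - g w| <= e) ->
  `|T f v - T g v| <= d^-1 * e.
Proof.
move=> r0 hfg.
have [w1 E1 h1] := T_attained f v.
have [w2 E2 h2] := T_attained g v.
have [a1 b1] := scale_bound _ _ r0 (hfg w1).
have [a2 b2] := scale_bound _ _ r0 (hfg w2).
rewrite mulrBr in a1; rewrite mulrBr in b1; rewrite mulrBr in a2; rewrite mulrBr in b2.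
rewrite ler_norml h1 h2; move: h1 h2; rewrite /T; case: (owner0 v) => h1 h2.
  have u1 := max_ub v (fun w => (gamma v w)%:~R + d^-1 * g w) w1 E1.
  have u2 := max_ub v (fun w => (gamma v w)%:~R + d^-1 * f w) w2 E2.
  rewrite h1 in u2; rewrite h2 in u1; simpl in u1, u2.
  apply/andP; split; lra.
have u1 := min_lb v (fun w => (gamma v w)%:~R + d^-1 * g w) w1 E1.
have u2 := min_lb v (fun w => (gamma v w)%:~R + d^-1 * f w) w2 E2.
rewrite h1 in u2; rewrite h2 in u1; simpl in u1, u2.
apply/andP; split; lra.
Qed.

End Aux.

Section Conv.
Variables (R : realType) (V : finType) (owner0 : pred V) (E : rel V)
  (gamma : V -> V -> int) (d : R).
Hypothesis hE : forall v : V, exists w : V, E v w.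
Hypothesis r0 : 0 <= d^-1.
Hypothesis r1 : d^-1 < 1.

Local Notation u := (wt owner0 E gamma d).
Local Notation r := (d^-1).
Local Notation TT := (@T R V owner0 E gamma d).

Let M : R := \sum_(v : V) `|u 0 v|.

Lemma M_ub w : `|u 0 w - 0| <= M.
Proof.
rewrite subr0 /M (bigD1 w) //= lerDl; apply: sumr_ge0 => i _; exact: normr_ge0.
Qed.

Lemma M_ge0 : 0 <= M.
Proof. by apply: sumr_ge0 => i _; exact: normr_ge0. Qed.

Lemma step k v : `|u k.+1 v - u k v| <= M * r ^+ k.+1.
Proof.
elim: k v => [|k IH] v.
  rewrite wtS wt0 expr1 mulrC; apply: T_contr => // w.
  exact: M_ub.
rewrite wtS [u k.+1 v]wtS exprS mulrCA; apply: T_contr => //.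
Qed.

Let c : R := M / (1 - r).

Lemma c_ge0 : 0 <= c.
Proof. by rewrite /c divr_ge0 ?M_ge0 // subr_ge0 ltW. Qed.

Lemma cM : c * (1 - r) = M.
Proof. by rewrite /c divfK // subr_eq0 eq_sym lt_eqF. Qed.

Lemma exists_fix : exists (x : V -> R) (c : R), 0 <= c /\
  (forall v, x v = TT x v) /\ forall k v, `|u k v - x v| <= c * r ^+ k.+1.
Proof.
pose w v k := u k v + c * r ^+ k.+1.
pose z v k := u k v - c * r ^+ k.+1.
have key k : c * r ^+ k.+1 - c * r ^+ k.+2 = M * r ^+ k.+1.
  by rewrite -cM [r ^+ k.+2]exprS; ring.
have wdec v : nonincreasing_seq (w v).
  apply/nonincreasing_seqP => k; rewrite /w.
  have := step k v; rewrite ler_norml -key => /andP[_ h]; lra.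
have zinc v : nondecreasing_seq (z v).
  apply/nondecreasing_seqP => k; rewrite /z.
  have := step k v; rewrite ler_norml -key => /andP[h _]; lra.
have zw v k : z v k <= w v k.
  rewrite /z /w; have := c_ge0; have : 0 <= r ^+ k.+1 by exact: exprn_ge0.
  move=> h1 h2; have := mulr_ge0 h2 h1; lra.
have wcv v : cvgn (w v).
  apply: nonincreasing_is_cvgn => //; exists (z v 0) => _ [k _ <-].
  exact: le_trans (zinc v _ _ (leq0n k)) (zw v k).
pose x v := limn (w v).
have zcv v : z v @ \oo --> x v.
  have h : (fun k => w v k - geometric (2 * c * r) r k) @ \oo --> x v - 0.
    apply: cvgB; first exact: wcv.
    by apply: cvg_geometric; rewrite ger0_norm.
  rewrite subr0 in h; apply: cvg_trans h; apply: near_eq_cvg; apply: nearW => k.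
  by rewrite /z /w /geometric /= exprS; ring.
have bnd k v : `|u k v - x v| <= c * r ^+ k.+1.
  have h1 := nonincreasing_cvgn_ge (wdec v) (wcv v) k.
  have h2 : z v k <= x v.
    have := nondecreasing_cvgn_le (zinc v) (cvgP _ (zcv v)) k.
    by rewrite (cvg_lim _ (zcv v)).
  rewrite ler_norml; apply/andP; split; rewrite /z /w /x in h1 h2 *; lra.
exists x, c; split; first exact: c_ge0. split; last exact: bnd. move=> v.
set e := `|x v - TT x v|.
have he k : e <= (2 * c * r) * r ^+ k.+1.
  rewrite /e; have := ler_distD (u k.+1 v) (x v) (TT x v).
  rewrite wtS; move=> /le_trans; apply.
  have h1 : `|x v - u k.+1 v| <= c * r ^+ k.+2 by rewrite distrC; exact: bnd.
  have h2 := @T_contr R V owner0 E gamma d hE _ _ _ v r0 (bnd k).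
  rewrite -wtS; have : r * (c * r ^+ k.+1) = c * r ^+ k.+2 by rewrite [r ^+ k.+2]exprS; ring.
  move=> h3; rewrite h3 in h2.
  have -> : 2 * c * r * r ^+ k.+1 = c * r ^+ k.+2 + c * r ^+ k.+2 by rewrite [r ^+ k.+2]exprS; ring.
  by rewrite wtS; apply: lerD.
have e0 : e <= 0.
  have g : geometric (2 * c * r * r) r @ \oo --> 0.
    by apply: cvg_geometric; rewrite ger0_norm.
  rewrite -(cvg_lim _ g).
  apply: limr_ge; first exact: (cvgP _ g).
  apply: nearW => k; rewrite /geometric /=.
  have -> : 2 * c * r * r * r ^+ k = 2 * c * r * r ^+ k.+1 by rewrite exprS; ring.
  exact: he.
2: apply/eqP; rewrite -subr_eq0 -normr_le0; exact: e0.
exact: Rhausdorff.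
Qed.

End Conv.

Section Rat.
Variables (R : realType) (V : finType) (owner0 : pred V) (E : rel V)
  (gamma : V -> V -> int) (p q : nat).
Hypothesis hE : forall v : V, exists w : V, E v w.
Hypothesis hp : (0 < p)%N.
Hypothesis hq : (0 < q)%N.
Local Notation d := (p%:R / q%:R : R).
Variable x : V -> R.
Hypothesis hx : forall v, x v = @T R V owner0 E gamma d x v.

Lemma rE : d^-1 = q%:R / p%:R.
Proof. by rewrite invf_div. Qed.

Lemma pnz : (p%:R : R) != 0.
Proof. by rewrite pnatr_eq0 -lt0n. Qed.

Definition sig (v : V) : V :=
  odflt v [pick w | x v == (gamma v w)%:~R + d^-1 * x w].

Lemma sigP v : x v = (gamma v (sig v))%:~R + d^-1 * x (sig v).
Proof.
rewrite /sig; case: pickP => [w /eqP //|none]; exfalso.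
have [w _ h] := @T_attained R V owner0 E gamma d hE x v.
by have := none w; rewrite {1}hx h eqxx.
Qed.

Lemma unroll v0 k : x v0 =
  \sum_(i < k) (gamma (iter i sig v0) (iter i.+1 sig v0))%:~R * d^-1 ^+ i
  + d^-1 ^+ k * x (iter k sig v0).
Proof.
elim: k => [|k IH]; first by rewrite big_ord0 add0r expr0 mul1r.
rewrite {1}IH (sigP (iter k sig v0)) big_ord_recr /= exprS; ring.
Qed.

Lemma sum_int k (g : nat -> int) :
  (\sum_(i < k) (g i)%:~R * d^-1 ^+ i) * p%:R ^+ k \is a Num.int.
Proof.
rewrite mulr_suml; apply: rpred_sum => i _.
have hi : (i <= k)%N by apply: ltnW.
have -> : (g i)%:~R * d^-1 ^+ i * p%:R ^+ k
    = (g i)%:~R * ((q ^ i * p ^ (k - i))%N)%:R :> R.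
  rewrite natrM !natrX rE -mulrA; congr (_ * _).
  move: (nat_of_ord i) hi => j hj.
  by rewrite -{1}(subnKC hj) exprD mulrA -exprMn divfK // pnz.
by apply: rpredM; [exact: intr_int | exact: natr_int].
Qed.

Lemma rp k : d^-1 ^+ k * p%:R ^+ k = q%:R ^+ k :> R.
Proof. by rewrite rE -exprMn divfK // pnz. Qed.

Lemma exp_mono (a b k : nat) : (a <= b)%N -> (a ^ k <= b ^ k)%N.
Proof. by move=> h; elim: k => // k IH; rewrite !expnS leq_mul. Qed.

Lemma lasso v0 m l : (q <= p)%N -> iter (l + m) sig v0 = iter m sig v0 ->
  x v0 * (p ^ m * (p ^ l - q ^ l))%N%:R \is a Num.int.
Proof.
move=> qp hl.
have hX := unroll (iter m sig v0) l.
rewrite -iterD hl in hX.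
have h0 := unroll v0 m.
set X := x (iter m sig v0) in hX h0 *.
set Sl := \sum_(i < l) _ in hX.
set Sm := \sum_(i < m) _ in h0.
have iSl : Sl * p%:R ^+ l \is a Num.int.
  exact: (sum_int l (fun i => gamma (iter i sig (iter m sig v0)) (iter i.+1 sig (iter m sig v0)))).
have iSm : Sm * p%:R ^+ m \is a Num.int.
  exact: (sum_int m (fun i => gamma (iter i sig v0) (iter i.+1 sig v0))).
have lq : (q ^ l <= p ^ l)%N by exact: exp_mono.
have eX : X * (p%:R ^+ l - q%:R ^+ l) = Sl * p%:R ^+ l.
  by rewrite -(rp l) mulrBr {1}hX; ring.
have -> : x v0 * (p ^ m * (p ^ l - q ^ l))%N%:R
   = (Sm * p%:R ^+ m) * (p ^ l - q ^ l)%N%:R + (q ^ m)%N%:R * (Sl * p%:R ^+ l).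
  rewrite natrM natrB // !natrX h0 -eX -(rp m); ring.
by apply: rpredD; apply: rpredM => //; exact: natr_int.
Qed.

Lemma pigeon v0 : exists m l, [/\ (0 < l)%N, (l + m <= #|V|)%N &
  iter (l + m) sig v0 = iter m sig v0].
Proof.
pose f (i : 'I_#|V|.+1) := iter i sig v0.
have : ~~ injectiveb f.
  by apply/negP => /injectiveP /leq_card; rewrite card_ord ltnn.
case/injectivePn => i [j] ij; rewrite /f => fij.
have [h|h|h] := ltngtP i j.
- exists i, (j - i)%N; rewrite (subnK (ltnW h)); split.
  + by rewrite subn_gt0.
  + by rewrite -ltnS; exact: ltn_ord.
  + by symmetry; exact: fij.
- exists j, (i - j)%N; rewrite (subnK (ltnW h)); split.
  + by rewrite subn_gt0.
  + by rewrite -ltnS; exact: ltn_ord.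
  + exact: fij.
- by move: ij; rewrite (val_inj h) eqxx.
Qed.

End Rat.

Lemma diff_mono (p q l n : nat) : (0 < q)%N -> (q <= p)%N -> (l <= n)%N ->
  (p ^ l - q ^ l <= p ^ n - q ^ n)%N.
Proof.
move=> hq qp /subnKC <-; elim: (n - l)%N => [|k IH]; first by rewrite addn0.
apply: (leq_trans IH); rewrite addnS !expnS.
have := @exp_mono q p (l + k) qp; move: (q ^ (l + k))%N (p ^ (l + k))%N => Q P h.
apply: (leq_trans (leq_pmull _ hq)); rewrite mulnBr.
by apply: leq_sub2r; exact: leq_mul.
Qed.



Theorem corollary1 (R : realType) (V : finType) (owner0 : pred V) (vinit : V)
  (E : rel V) (gamma : V -> V -> int) (p q : nat)
  (hE : forall v : V, exists w : V, E v w)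
  (hp : (0 < p)%N) (hq : (0 < q)%N) (hd : (q < p)%N) :
  exists (a : int) (b : nat),
    (0 < b <= (p ^ #|V| - q ^ #|V|) * p ^ #|V|)%N /\
    (fun k : nat => wt owner0 E gamma (p%:R / q%:R : R) k vinit)
      @ \oo --> (a%:~R / b%:R : R).
Proof.
have r0 : 0 <= (p%:R / q%:R : R)^-1 by rewrite invf_div divr_ge0.
have r1 : (p%:R / q%:R : R)^-1 < 1.
  by rewrite invf_div ltr_pdivrMr ?ltr0n // mul1r ltr_nat.
have [x [c [c0 [hx bnd]]]] := @exists_fix R V owner0 E gamma _ hE r0 r1.
have [m [l [l0 lm hl]]] := @pigeon R V gamma p q x vinit.
have := @lasso R V owner0 E gamma p q hE hp x hx vinit m l (ltnW hd) hl => /intrP [a ha].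
have bpos : (0 < p ^ m * (p ^ l - q ^ l))%N.
  by rewrite muln_gt0 expn_gt0 hp subn_gt0 ltn_exp2r.
exists a, (p ^ m * (p ^ l - q ^ l))%N; split.
  rewrite bpos /= mulnC; apply: leq_mul.
    by apply: diff_mono => //; [exact: ltnW | apply: leq_trans lm; exact: leq_addr].
  by apply: leq_pexp2l => //; apply: leq_trans lm; exact: leq_addl.
rewrite -ha mulfK; last by rewrite pnatr_eq0 -lt0n.
set r := (p%:R / q%:R : R)^-1 in r0 r1 bnd.
apply/cvgrPdist_le => eps eps0.
have g : geometric (c * r) r @ \oo --> 0 by apply: cvg_geometric; rewrite ger0_norm.
move/cvgrPdist_le : g => /(_ eps eps0); apply: filterS => k /=.
rewrite sub0r normrN /geometric => h.
rewrite distrC; apply: le_trans (bnd k vinit) _.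
rewrite exprS mulrA; apply: le_trans h; exact: ler_norm.
Qed.
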